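(* Consider $n$ sub-populations with constant sizes $N_i>0$ and constant nonnegative flows $F_{ij}\ge 0$ ($i\neq j$; $F_{ij}$ is the number of individuals per unit time flowing from sub-population $j$ to sub-population $i$, $F_{ii}=0$), and the dynamics, for $i\in[n]$, \begin{align*} \dot s_i &= \alpha_i r_i-\beta_i x_i s_i+\tfrac{1}{N_i}\textstyle\sum_{j\neq i}(F_{ij}s_j-F_{ji}s_i),\\ \dot e_i &= \beta_i x_i s_i-\sigma_i e_i+\tfrac{1}{N_i}\textstyle\sum_{j\neq i}(F_{ij}e_j-F_{ji}e_i),\\ \dot x_i &= \sigma_i e_i-\delta_i x_i+\tfrac{1}{N_i}\textstyle\sum_{j\neq i}(F_{ij}x_j-F_{ji}x_i),\\ \dot r_i &= \delta_i x_i-\alpha_i r_i+\tfrac{1}{N_i}\textstyle\sum_{j\neq i}(F_{ij}r_j-F_{ji}r_i). \end{align*} Assume (A1) for every $j\in[n]$, $\sum_{i\neq j}F_{ji}=\sum_{i\neq j}F_{ij}$ (total inflow into $j$ equals total outflow from $j$); and (A2) $\alpha_i,\beta_i,\sigma_i,\delta_i>0$ for all $i$, and the initial values at time $t_0\ge 0$ satisfy $s_i(t_0),e_i(t_0),x_i(t_0),r_i(t_0)\in[0,1]$ and $s_i(t_0)+e_i(t_0)+x_i(t_0)+r_i(t_0)=1$ for all $i\in[n]$. Then $s_i(t),e_i(t),x_i(t),r_i(t)\in[0,1]$ and $s_i(t)+e_i(t)+x_i(t)+r_i(t)=1$ for all $i\in[n]$ and all $t\ge 0$.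
   Context: This is a networked SEIRS epidemic model: $s_i,e_i,x_i,r_i$ are the proportions of susceptible, exposed, infected and recovered individuals in sub-population $i$; $\beta_i$ is the infection rate, $\sigma_i$ the exposed-to-infected rate, $\delta_i$ the healing rate, $\alpha_i$ the rate of immunity loss. *)

(* Defs.v *)
From HB Require Import structures.
From mathcomp Require Import all_boot all_order all_algebra.
From mathcomp Require Import all_classical all_reals all_analysis.
Set Implicit Arguments. Unset Strict Implicit. Unset Printing Implicit Defensive.
Import Order.TTheory GRing.Theory Num.Theory.
Import numFieldNormedType.Exports.
Local Open Scope classical_set_scope.
Local Open Scope ring_scope.

Definition flow_term (R : realType) (n : nat) (N : 'I_n -> R)
  (F : 'I_n -> 'I_n -> R) (y : 'I_n -> R -> R) (i : 'I_n) (t : R) : R :=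
  (N i)^-1 * \sum_(j < n | j != i) (F i j * y j t - F j i * y i t).

(* (s, e, x, r) solves the networked SEIRS system for t > t0, and each
   component is continuous on [t0, +oo) (so the initial value at t0 is attained). *)
Definition SEIRS_solution (R : realType) (n : nat) (N : 'I_n -> R)
  (F : 'I_n -> 'I_n -> R) (alpha beta sigma delta : 'I_n -> R)
  (t0 : R) (s e x r : 'I_n -> R -> R) : Prop :=
  (forall i : 'I_n,
     {within `[t0, +oo[, continuous (s i)} /\
     {within `[t0, +oo[, continuous (e i)} /\
     {within `[t0, +oo[, continuous (x i)} /\
     {within `[t0, +oo[, continuous (r i)}) /\
  (forall (i : 'I_n) (t : R), t0 < t ->
     is_derive t 1 (s i)
       (alpha i * r i t - beta i * x i t * s i t + flow_term N F s i t) /\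
     is_derive t 1 (e i)
       (beta i * x i t * s i t - sigma i * e i t + flow_term N F e i t) /\
     is_derive t 1 (x i)
       (sigma i * e i t - delta i * x i t + flow_term N F x i t) /\
     is_derive t 1 (r i)
       (delta i * x i t - alpha i * r i t + flow_term N F r i t)).

(* Main.v *)
Require Import Defs.
From HB Require Import structures.
From mathcomp Require Import all_boot all_order all_algebra.
From mathcomp Require Import all_classical all_reals all_analysis.
From mathcomp Require Import lra ring.
Import Order.TTheory GRing.Theory Num.Theory.
Import numFieldNormedType.Exports.
Local Open Scope ring_scope.

Section Helpers.
Local Open Scope classical_set_scope.

Lemma deriv_pos_left (R : realType) (f : R -> R) (t l d : R) :
  is_derive t 1 f l -> 0 < l -> 0 < d ->
  exists u, t - d < u < t /\ f u < f t.
Proof.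
move=> fd l0 d0.
have cv : (fun h : R => h^-1 *: ((f \o shift t) (h *: 1) - f t)) @ 0^' --> l.
  have := @ex_derive _ _ _ _ _ _ _ fd.
  rewrite /derivable => /cvg_ex[l' Hl'].
  have : 'D_1 f t = l := @derive_val _ _ _ _ _ _ _ fd.
  rewrite /derive (cvg_lim _ Hl') // => <-.
  done.
have : \forall h \near 0^', 0 < h^-1 *: ((f \o shift t) (h *: 1) - f t).
  by apply: (cvgr_gt l cv).
move=> /nbhs_ballP[e /= e0 He].
set h := - (Num.min e d / 2).
have mp : 0 < Num.min e d by rewrite lt_min e0 d0.
have h0 : h < 0 by rewrite /h oppr_lt0 divr_gt0.
have hb : ball 0 e h.
  rewrite /ball /= sub0r normrN /h normrN gtr0_norm ?divr_gt0 //.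
  apply: (@lt_le_trans _ _ (Num.min e d)); first by rewrite ltr_pdivrMr // ltr_pMr // ltr1n.
  by rewrite ge_min lexx.
have := He h hb (negbT (lt_eqF h0)).
rewrite /GRing.scale /= mulr1 => q.
have : f (h + t) - f t < 0.
  rewrite (_ : f (h+t) - f t = h * (h^-1 * (f (h + t) - f t))); last first.
    by rewrite mulrA mulfV ?(lt_eqF h0) // mul1r.
  by rewrite nmulr_rlt0.
move=> lt; exists (h + t); split; last by rewrite -subr_lt0.
have : Num.min e d <= d by rewrite ge_min lexx orbT.
rewrite /h in h0 *; move: (Num.min e d) mp => m mp md.
apply/andP; split; lra.
Qed.


Lemma within_ball (R : realType) (A : set R) (p : R) (P : R -> Prop) :
  (\forall u \near within A (nbhs p), P u) ->
  exists2 e : R, 0 < e & forall u, `|p - u| < e -> A u -> P u.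
Proof.
move=> /nbhs_ballP[e /= e0 He]; exists e => // u pu Au.
Qed.

Lemma invariance (R : realType) (I : finType) (y dy : I -> R -> R) (t0 : R) :
  (forall d, {within `[t0, +oo[, continuous (y d)}) ->
  (forall d, 0 <= y d t0) ->
  (forall d t, t0 < t -> is_derive t 1 (y d) (dy d t)) ->
  (forall T, exists M : R, forall t c (eta : R), t0 < t -> t <= T -> 0 < eta ->
      (forall d, - eta <= y d t) -> y c t = - eta -> - (M * eta) <= dy c t) ->
  forall d t, t0 <= t -> 0 <= y d t.
Proof.
move=> cy y0 dyd H d0 T tT.
have [M HM] := H T.
set m := Num.Def.archi_bound `|M|.
have Mm : M < m%:R.
  by apply: (le_lt_trans (ler_norm M)); apply: archi_boundP.
clearbody m.
set phi : R -> R := expR ^+ m.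
have phiE (u : R) : phi u = expR u ^+ m by rewrite /phi exprfctE.
have phi0 (u : R) : 0 < phi u by rewrite phiE exprn_gt0 // expR_gt0.
have dphi (u : R) : is_derive u 1 phi (m%:R * phi u).
  have := is_deriveX m (is_derive_expR u).
  move=> h; apply: is_derive_eq.
  rewrite phiE /GRing.scale /=.
  by case: (m) => [|k]; [rewrite !mul0r | rewrite -mulrA -exprSr].
have cphi (u : R) : {for u, continuous phi}.
  apply: differentiable_continuous; apply/derivable1_diffP.
  by case: (dphi u).
pose A := `[t0, +oo[%classic.
have claim : forall eps : R, 0 < eps -> forall u, t0 <= u <= T ->
    forall d, 0 < y d u + eps * phi u.
  move=> eps eps0.
  pose w d := y d + eps *: phi.
  have wE d u : w d u = y d u + eps * phi u by [].
  have cw d p : t0 <= p -> w d @ within A (nbhs p) --> w d p.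
    move=> tp.
    have cyp := (proj1 (subspace_continuousP _ _) (cy d)) p.
    apply: cvgD; first by apply: cyp; rewrite /A /= in_itv /= andbT.
    apply: cvgZl_tmp.
    exact: (cvg_trans (cvg_app _ (cvg_within _)) (cphi p)).
  have inA u : A u = (t0 <= u) by rewrite /A /= in_itv /= andbT.
  have nearpos p : t0 <= p -> (forall d, 0 < w d p) ->
      exists2 e : R, 0 < e & forall u, `|p - u| < e -> t0 <= u -> forall d, 0 < w d u.
    move=> tp pos.
    have : \forall u \near within A (nbhs p), forall d, 0 < w d u.
      apply: filter_forall => d.
      exact: (cvgr_gt _ (cw d p tp) _ (pos d)).
    move=> /within_ball[e e0 He]; exists e => // u pu tu; apply: He => //.
    by rewrite inA.
  have nearneg p d : t0 <= p -> w d p < 0 ->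
      exists2 e : R, 0 < e & forall u, `|p - u| < e -> t0 <= u -> w d u < 0.
    move=> tp neg.
    have : \forall u \near within A (nbhs p), w d u < 0.
      exact: (cvgr_lt _ (cw d p tp) _ neg).
    move=> /within_ball[e e0 He]; exists e => // u pu tu; apply: He => //.
    by rewrite inA.
  have wt0 d : 0 < w d t0.
    rewrite wE; have := y0 d; have := mulr_gt0 eps0 (phi0 t0); lra.
  have [Zne|Ze] := pselect (exists u, (t0 <= u <= T) /\ exists c, w c u <= 0); last first.
    move=> u uI d; rewrite -wE.
    have [//|wle] := ltP 0 (w d u).
    by exfalso; apply: Ze; exists u; split => //; exists d.
  pose Z := [set u | (t0 <= u <= T) /\ exists c, w c u <= 0].
  have Zn : Z !=set0 by case: Zne => u hu; exists u.
  have lbZ : lbound Z t0 by move=> z [/andP[]].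
  have hlb : has_lbound Z by exists t0.
  set ts := inf Z.
  have tsz z : Z z -> ts <= z by move=> Zz; apply: ge_inf.
  have t0ts : t0 <= ts by apply: lb_le_inf.
  have tsT : ts <= T.
    by case: Zn => z Zz; apply: (le_trans (tsz z Zz)); case: Zz => /andP[].
  have before u : t0 <= u -> u < ts -> forall d, 0 < w d u.
    move=> tu uts d; have [//|wle] := ltP 0 (w d u).
    have Zu : Z u by split; [rewrite tu /= (le_trans (ltW uts)) | exists d].
    by have := tsz u Zu; rewrite leNgt uts.
  have tsgt : t0 < ts.
    have [e e0 He] := nearpos t0 (lexx _) wt0.
    have [h|] := ltP ts (t0 + e); last by move=> h; lra.
    have [z Zz zlt] := inf_lt Zn h.
    have t0z := lbZ z Zz.
    case: Zz => _ [c wc].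
    have : 0 < w c z.
      by apply: He => //; rewrite distrC ger0_norm ?subr_ge0 //; lra.
    lra.
  have wts_ge d : 0 <= w d ts.
    have [//|wlt] := leP 0 (w d ts).
    have [e e0 He] := nearneg ts d t0ts wlt.
    pose u := ts - Num.min e (ts - t0) / 2.
    have me : Num.min e (ts - t0) <= e by rewrite ge_min lexx.
    have mt : Num.min e (ts - t0) <= ts - t0 by rewrite ge_min lexx orbT.
    have mp : 0 < Num.min e (ts - t0) by rewrite lt_min e0 subr_gt0.
    have tu : t0 <= u by rewrite /u; lra.
    have uts : u < ts by rewrite /u; lra.
    have := before u tu uts d.
    have : w d u < 0.
      by apply: He => //; rewrite /u opprB addrC subrK ger0_norm; lra.
    lra.
  have [c wc] : exists c, w c ts <= 0.
    apply: contrapT => nc.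
    have pos d : 0 < w d ts.
      have [//|wle] := ltP 0 (w d ts).
      by exfalso; apply: nc; exists d.
    have [e e0 He] := nearpos ts t0ts pos.
    have h : ts < ts + e by lra.
    have [z Zz zlt] := inf_lt Zn h.
    have tz := tsz z Zz.
    case: Zz => /andP[t0z _] [c' wc'].
    have : 0 < w c' z.
      by apply: He => //; rewrite distrC ger0_norm ?subr_ge0 //; lra.
    lra.
  have wc0 : w c ts = 0 by apply: le_anti; rewrite wc wts_ge.
  set eta := eps * phi ts.
  have eta0 : 0 < eta by apply: mulr_gt0.
  have yc : y c ts = - eta by move: wc0; rewrite wE -/eta; lra.
  have yd d : - eta <= y d ts by have := wts_ge d; rewrite wE -/eta; lra.
  have hM := HM ts c eta tsgt tsT eta0 yd yc.
  have dw : is_derive ts 1 (w c) (dy c ts + eps *: (m%:R * phi ts)).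
    exact: is_deriveD (dyd c ts tsgt) (is_deriveZ eps (dphi ts)).
  have lpos : 0 < dy c ts + eps *: (m%:R * phi ts).
    rewrite /GRing.scale /= mulrCA -/eta.
    have mM : 0 < m%:R - M by rewrite subr_gt0.
    have := mulr_gt0 mM eta0; rewrite mulrBl; lra.
  have tt0 : 0 < ts - t0 by rewrite subr_gt0.
  have [u [/andP[u1 u2] u3]] := @deriv_pos_left R (w c) ts _ (ts - t0) dw lpos tt0.
  have := before u _ u2 c; rewrite wc0 in u3.
  have : t0 <= u by lra.
  move=> tu /(_ tu); lra.
have [//|ylt] := leP 0 (y d0 T).
pose eps := - y d0 T / (2 * phi T).
have eps0 : 0 < eps by apply: divr_gt0; [lra | apply: mulr_gt0; [lra|apply: phi0]].
have := claim eps eps0 T _ d0; rewrite tT lexx => /(_ isT).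
have -> : eps * phi T = - y d0 T / 2.
  by rewrite /eps; field; exact: lt0r_neq0 (phi0 T).
by move=> h; exfalso; lra.
Qed.

Lemma flow_lb (R : realType) (n : nat) (N : 'I_n -> R) (F : 'I_n -> 'I_n -> R)
  (y : 'I_n -> R -> R) (c : 'I_n) (t eta : R) :
  0 < N c -> (forall i j : 'I_n, i != j -> 0 <= F i j) -> 0 <= eta ->
  (forall j, - eta <= y j t) -> y c t = - eta ->
  - ((N c)^-1 * (\sum_(j < n | j != c) F c j) * eta) <= flow_term N F y c t.
Proof.
move=> Nc Fnn eta0 yj yc; rewrite /flow_term -mulrA -mulrN.
apply: ler_wpM2l; first by rewrite invr_ge0 ltW.
rewrite mulr_suml -sumrN; apply: ler_sum => j jc.
rewrite yc; have := Fnn c j; rewrite eq_sym jc => /(_ isT) Fcj.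
have := Fnn j c jc => Fjc; have := yj j => yjt.
nra.
Qed.

Lemma prod_lb (R : realType) (a b B eta : R) : 0 <= eta -> - eta <= a -> - eta <= b ->
  `|a| <= B -> `|b| <= B -> - (B * eta) <= a * b.
Proof.
move=> e0 ha hb; rewrite !ler_norml => /andP[a1 a2] /andP[b1 b2].
have [a0|a0] := leP 0 a; have [b0|b0] := leP 0 b.
- have := mulr_ge0 a0 b0; nra.
- have := mulr_ge0 a0 (_ : 0 <= b + eta); nra.
- have := mulr_ge0 b0 (_ : 0 <= a + eta); nra.
- nra.
Qed.

Lemma bounded_on (R : realType) (f : R -> R) (a b : R) : a <= b ->
  {within `[a, +oo[, continuous f} ->
  exists c : R, 0 <= c /\ forall t, a <= t <= b -> `|f t| <= c.
Proof.
move=> ab cf.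
have cf' : {within `[a, b], continuous f}.
  apply: continuous_subspaceW cf => u /=; rewrite !in_itv /= andbT => /andP[] //.
have [cM _ hM] := EVT_max ab cf'.
have [cm _ hm] := EVT_min ab cf'.
exists (`|f cM| + `|f cm|); split; first by rewrite addr_ge0.
move=> t tab.
have tI : t \in `[a, b]%R by rewrite in_itv /=.
have := hM t tI; have := hm t tI.
have := ler_norm (f cM); have := ler_norm (- f cm); rewrite normrN.
have := normr_ge0 (f cM); have := normr_ge0 (f cm).
rewrite ler_norml; move=> h1 h2 h3 h4 h5 h6; apply/andP; split; lra.
Qed.

End Helpers.
Arguments flow_lb {R n N F y c t eta}.
Arguments bounded_on {R f a b}.
Arguments prod_lb {R a b B eta}.
Theorem lemma5 (R : realType) (n : nat) (N : 'I_n -> R)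
  (F : 'I_n -> 'I_n -> R) (alpha beta sigma delta : 'I_n -> R)
  (t0 : R) (s e x r : 'I_n -> R -> R) :
  (forall i : 'I_n, 0 < N i) ->
  (forall i j : 'I_n, i != j -> 0 <= F i j) ->
  (forall i : 'I_n, F i i = 0) ->
  (* (A1) balanced flows *)
  (forall j : 'I_n,
     \sum_(i < n | i != j) F j i = \sum_(i < n | i != j) F i j) ->
  (* (A2) positive rates *)
  (forall i : 'I_n, 0 < alpha i /\ 0 < beta i /\ 0 < sigma i /\ 0 < delta i) ->
  0 <= t0 ->
  (forall i : 'I_n,
     0 <= s i t0 <= 1 /\ 0 <= e i t0 <= 1 /\ 0 <= x i t0 <= 1 /\
     0 <= r i t0 <= 1 /\ s i t0 + e i t0 + x i t0 + r i t0 = 1) ->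
  SEIRS_solution N F alpha beta sigma delta t0 s e x r ->
  forall (i : 'I_n) (t : R), t0 <= t ->
     0 <= s i t <= 1 /\ 0 <= e i t <= 1 /\ 0 <= x i t <= 1 /\
     0 <= r i t <= 1 /\ s i t + e i t + x i t + r i t = 1.
Proof.
Local Open Scope classical_set_scope.
move=> Npos Fnn Fii A1 rates t0ge init [cont der].
have sub_cont (f : R -> R) (p : R) : {within `[t0, +oo[, continuous f} -> t0 <= p ->
    f @ within `[t0, +oo[%classic (nbhs p) --> f p.
  move=> cf tp; apply: (proj1 (subspace_continuousP _ _) cf).
  by rewrite /= in_itv /= andbT.
pose D i : R -> R := s i + e i + x i + r i - cst (1 : R).
have DE i t : D i t = s i t + e i t + x i t + r i t - 1 by [].
have flowD i t : flow_term N F s i t + flow_term N F e i t + flow_term N F x i t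
    + flow_term N F r i t = flow_term N F D i t.
  rewrite /flow_term -!mulrDr; congr (_ * _).
  have h : \sum_(j < n | j != i) (F i j * D j t - F j i * D i t) =
     \sum_(j < n | j != i) ((F i j * s j t - F j i * s i t) + (F i j * e j t - F j i * e i t)
        + (F i j * x j t - F j i * x i t) + (F i j * r j t - F j i * r i t))
     - (\sum_(j < n | j != i) F i j - \sum_(j < n | j != i) F j i).
    rewrite -sumrB -sumrB; apply: eq_bigr => j _; rewrite !DE; ring.
  by rewrite h A1 subrr subr0 !big_split.
have Dcont i : {within `[t0, +oo[, continuous (D i)}.
  apply/subspace_continuousP => p Ap.
  have [cs [ce [cx cr]]] := cont i.
  have tp : t0 <= p by move: Ap; rewrite /= in_itv /= andbT.
  apply: cvgB; last exact: cvg_cst.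
  apply: cvgD; last exact: sub_cont.
  apply: cvgD; last exact: sub_cont.
  by apply: cvgD; exact: sub_cont.
have Dder i t : t0 < t -> is_derive t 1 (D i) (flow_term N F D i t).
  move=> tt; have [ds [de [dx dr]]] := der i t tt.
  have := is_deriveB (is_deriveD (is_deriveD (is_deriveD ds de) dx) dr) (is_derive_cst (1 : R) t (1 : R)).
  move=> hh; apply: is_derive_eq; rewrite -flowD; ring.
have D0 i : D i t0 = 0.
  by have [_ [_ [_ [_ h]]]] := init i; rewrite DE h subrr.
pose K i := (N i)^-1 * \sum_(j < n | j != i) F i j.
have K0 i : 0 <= K i.
  by apply: mulr_ge0; [rewrite invr_ge0 ltW | apply: sumr_ge0 => j ji; apply: Fnn; rewrite eq_sym].
have Kle i : K i <= \sum_j K j.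
  by rewrite (bigD1 i) //= lerDl; apply: sumr_ge0 => j _.
have Dge : forall i t, t0 <= t -> 0 <= D i t.
  apply: (@invariance R _ D (flow_term N F D) t0) => //.
  - by move=> i; rewrite D0.
  - move=> T; exists (\sum_j K j) => t c eta _ _ eta0 yd yc.
    apply: (le_trans _ (flow_lb (Npos c) Fnn (ltW eta0) yd yc)).
    rewrite lerN2; apply: ler_wpM2r; first exact: ltW.
    exact: (Kle c).
pose mD i : R -> R := - D i.
have mDE i t : mD i t = - D i t by [].
have Dle : forall i t, t0 <= t -> 0 <= mD i t.
  apply: (@invariance R _ mD (flow_term N F mD) t0).
  - move=> i; apply/subspace_continuousP => p Ap; apply: cvgN.
    by apply: (proj1 (subspace_continuousP _ _) (Dcont i)).
  - by move=> i; rewrite mDE D0 oppr0.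
  - move=> i t tt; rewrite /mD; apply: (is_derive_eq (is_deriveN (Dder i t tt))).
    rewrite /flow_term -mulrN -sumrN; congr (_ * _); apply: eq_bigr => j _.
    have nE (f : R -> R) u : (- f) u = - f u by [].
    rewrite !nE; ring.
  - move=> T; exists (\sum_j K j) => t c eta _ _ eta0 yd yc.
    apply: (le_trans _ (flow_lb (Npos c) Fnn (ltW eta0) yd yc)).
    rewrite lerN2; apply: ler_wpM2r; first exact: ltW.
    exact: (Kle c).
have sum1 i t : t0 <= t -> s i t + e i t + x i t + r i t = 1.
  move=> tt; have := Dge i t tt; have := Dle i t tt; rewrite mDE DE; lra.
pose I := (('I_n + 'I_n) + ('I_n + 'I_n))%type.
pose Y (k : I) : R -> R := match k with
  | inl (inl i) => s i | inl (inr i) => e i | inr (inl i) => x i | inr (inr i) => r i end.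
pose dY (k : I) (t : R) : R := match k with
  | inl (inl i) => alpha i * r i t - beta i * x i t * s i t + flow_term N F s i t
  | inl (inr i) => beta i * x i t * s i t - sigma i * e i t + flow_term N F e i t
  | inr (inl i) => sigma i * e i t - delta i * x i t + flow_term N F x i t
  | inr (inr i) => delta i * x i t - alpha i * r i t + flow_term N F r i t end.
have Yge : forall k t, t0 <= t -> 0 <= Y k t.
  apply: (@invariance R _ Y dY t0).
  - by case=> [[i|i]|[i|i]]; have [? [? [? ?]]] := cont i.
  - by case=> [[i|i]|[i|i]]; have [/andP[? _] [/andP[? _] [/andP[? _] [/andP[? _] _]]]] := init i.
  - by case=> [[i|i]|[i|i]] t tt; have [? [? [? ?]]] := der i t tt.
  - move=> T.
    pose Tm := Num.max T t0.
    have t0Tm : t0 <= Tm by rewrite le_max lexx orbT.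
    have TTm : T <= Tm by rewrite le_max lexx.
    have hb i : exists b : R, 0 <= b /\ forall t, t0 <= t <= Tm -> `|s i t| <= b /\ `|x i t| <= b.
      have [cs [cs0 hs]] := bounded_on t0Tm (proj1 (cont i)).
      have [cx [cx0 hx]] := bounded_on t0Tm (proj1 (proj2 (proj2 (cont i)))).
      exists (cs + cx); split; first by rewrite addr_ge0.
      move=> t tI; have := hs t tI; have := hx t tI; move=> h1 h2; split; lra.
    have [bf hbf] := choice hb.
    pose B := \sum_i bf i.
    have B0 : 0 <= B by apply: sumr_ge0 => i _; case: (hbf i).
    have bB i : bf i <= B.
      by rewrite /B (bigD1 i) //= lerDl; apply: sumr_ge0 => j _; case: (hbf j).
    have bnd i t : t0 <= t <= Tm -> `|s i t| <= B /\ `|x i t| <= B.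
      move=> tI; have [_ h] := hbf i; have [h1 h2] := h t tI.
      by split; apply: le_trans (bB i).
    pose Mi i := alpha i + beta i * B + sigma i + delta i + K i.
    have Mi0 i : 0 <= Mi i.
      have [a0 [b0 [s0 d0]]] := rates i; have := K0 i; have := mulr_ge0 (ltW b0) B0.
      rewrite /Mi; lra.
    have Mle i : Mi i <= \sum_j Mi j.
      by rewrite (bigD1 i) //= lerDl; apply: sumr_ge0 => j _.
    exists (\sum_j Mi j) => t c eta tt tT eta0 yd yc.
    have tI : t0 <= t <= Tm by rewrite (ltW tt) /= (le_trans tT TTm).
    have hMi : forall i, Mi i * eta <= (\sum_j Mi j) * eta.
      by move=> i; apply: ler_wpM2r; [exact: ltW | exact: Mle].
    have ys j : - eta <= s j t := yd (inl (inl j)).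
    have ye j : - eta <= e j t := yd (inl (inr j)).
    have yx j : - eta <= x j t := yd (inr (inl j)).
    have yr j : - eta <= r j t := yd (inr (inr j)).
    move: yc; case: c => [[i|i]|[i|i]] /= yc.
    + have fl := flow_lb (Npos i) Fnn (ltW eta0) ys yc.
      have [a0 [b0 [s0 d0]]] := rates i.
      have [_ hx] := bnd i t tI; move: hx; rewrite ler_norml => /andP[hx1 hx2].
      have h1 := mulr_ge0 (ltW a0) (_ : 0 <= r i t + eta).
      have h2 := mulr_ge0 (mulr_ge0 (ltW b0) (ltW eta0)) (_ : 0 <= x i t + B).
      have := hMi i; rewrite /Mi /K yc.
      have := yr i; have := ltW s0; have := ltW d0; have := mulr_ge0 (ltW s0) (ltW eta0).
      have := mulr_ge0 (ltW d0) (ltW eta0).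
      move=> *; nra.
    + have fl := flow_lb (Npos i) Fnn (ltW eta0) ye yc.
      have [hs hx] := bnd i t tI.
      have hp := prod_lb (ltW eta0) (yx i) (ys i) hx hs.
      have [a0 [b0 [s0 d0]]] := rates i.
      have := hMi i; rewrite /Mi /K yc.
      have := mulr_ge0 (ltW a0) (ltW eta0); have := mulr_ge0 (ltW b0) (ltW eta0).
      have := mulr_ge0 (ltW s0) (ltW eta0); have := mulr_ge0 (ltW d0) (ltW eta0).
      have := mulr_ge0 (mulr_ge0 (ltW b0) B0) (ltW eta0).
      have := ler_wpM2l (ltW b0) hp.
      move=> *; nra.
    + have fl := flow_lb (Npos i) Fnn (ltW eta0) yx yc.
      have ee : 0 <= e i t + eta by have := ye i; lra.
      have h1 := mulr_ge0 (ltW (proj1 (proj2 (proj2 (rates i))))) ee.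
      have [a0 [b0 [s0 d0]]] := rates i.
      have := hMi i; rewrite /Mi /K yc.
      have := mulr_ge0 (ltW a0) (ltW eta0); have := mulr_ge0 (ltW b0) (ltW eta0).
      have := mulr_ge0 (ltW s0) (ltW eta0); have := mulr_ge0 (ltW d0) (ltW eta0).
      have := mulr_ge0 (mulr_ge0 (ltW b0) B0) (ltW eta0).
      move=> *; nra.
    + have fl := flow_lb (Npos i) Fnn (ltW eta0) yr yc.
      have ee : 0 <= x i t + eta by have := yx i; lra.
      have h1 := mulr_ge0 (ltW (proj2 (proj2 (proj2 (rates i))))) ee.
      have [a0 [b0 [s0 d0]]] := rates i.
      have := hMi i; rewrite /Mi /K yc.
      have := mulr_ge0 (ltW a0) (ltW eta0); have := mulr_ge0 (ltW b0) (ltW eta0).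
      have := mulr_ge0 (ltW s0) (ltW eta0); have := mulr_ge0 (ltW d0) (ltW eta0).
      have := mulr_ge0 (mulr_ge0 (ltW b0) B0) (ltW eta0).
      move=> *; nra.
move=> i t tt.
have := Yge (inl (inl i)) t tt; have := Yge (inl (inr i)) t tt.
have := Yge (inr (inl i)) t tt; have := Yge (inr (inr i)) t tt.
have := sum1 i t tt; rewrite /Y /=.
move=> h1 h2 h3 h4 h5.
by split; [|split; [|split; [|split]]]; rewrite // ?h2 ?h3 ?h4 ?h5 /=; lra.
Qed.
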